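(* Let $\tau$ be a constant and consider, for $u+v^2>0$, the equation $$(u+v^2)f_{vv}+vf_v-f-\tau f^{-3}=0,\qquad f=\frac{1}{\sqrt{\phi}},$$ for a positive function $\phi(u,v)$. Its non-constant solutions are given by $$\phi(u,v)=\frac{2q(u)\left(\sqrt{u+v^2}\pm v\right)^2}{\left[q(u)\left(\sqrt{u+v^2}\pm v\right)^2+p(u)\right]^2+\tau},$$ where $p(u)$ and $q(u)$ are arbitrary functions.
   Context: $f_v,f_{vv}$ denote partial derivatives with respect to $v$. *)

(* Defs.v *)
From Stdlib Require Import Reals.
From Coquelicot Require Import Coquelicot.
Open Scope R_scope.

Definition wfun (s : bool) (u v : R) : R :=
  sqrt (u + v ^ 2) + (if s then v else - v).

Definition phi_sol (tau p q : R) (s : bool) (u v : R) : R :=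
  2 * q * (wfun s u v) ^ 2 / ((q * (wfun s u v) ^ 2 + p) ^ 2 + tau).

Definition f_of (phi_u : R -> R) : R -> R := fun v => / sqrt (phi_u v).

Definition eq_lhs (tau u : R) (f : R -> R) (v : R) : R :=
  (u + v ^ 2) * Derive_n f 2 v + v * Derive f v - f v - tau * / (f v ^ 3).

Definition twice_diff (phi : R -> R -> R) (u v : R) : Prop :=
  ex_derive (phi u) v /\ ex_derive (Derive (phi u)) v.

(* Main.v *)
Require Import Defs.
From Stdlib Require Import Reals Lra.
From Coquelicot Require Import Coquelicot.
Open Scope R_scope.

Lemma loc_int (a b v : R) : a < v < b -> locally v (fun t => a < t < b).
Proof.
  intros [H1 H2].
  assert (He : 0 < Rmin (v - a) (b - v)) by (apply Rmin_pos; lra).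
  exists (mkposreal _ He). intros y Hy.
  change (Rabs (y - v) < Rmin (v - a) (b - v)) in Hy.
  apply Rabs_def2 in Hy. destruct Hy as [Hy1 Hy2].
  pose proof (Rmin_l (v-a) (b-v)). pose proof (Rmin_r (v-a) (b-v)). lra.
Qed.

Lemma loc_imp (v : R) (P Q : R -> Prop) : locally v P -> (forall t, P t -> Q t) -> locally v Q.
Proof. intros [e He] H. exists e. intros y Hy. apply H, He, Hy. Qed.

Lemma const_int (a b : R) (f : R -> R) :
  (forall x, a < x < b -> is_derive f x 0) ->
  forall x y, a < x < b -> a < y < b -> f x = f y.
Proof.
  intros Hd x y Hx Hy.
  destruct (MVT_gen f x y (fun _ => 0)) as [c [_ Hc]].
  - intros t Ht. apply Hd. pose proof (Rmin_l x y). pose proof (Rmin_r x y).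
    pose proof (Rmax_l x y). pose proof (Rmax_r x y).
    destruct (Rle_dec x y); [rewrite Rmin_left, Rmax_right in Ht by lra|
      rewrite Rmin_right, Rmax_left in Ht by lra]; lra.
  - intros t Ht. apply continuity_pt_filterlim. apply (ex_derive_continuous f).
    exists 0. apply Hd.
    destruct (Rle_dec x y); [rewrite Rmin_left, Rmax_right in Ht by lra|
      rewrite Rmin_right, Rmax_left in Ht by lra]; lra.
  - lra.
Qed.

Lemma K (tau u a b : R) (F g g1 g2 : R -> R) v :
  a < v < b ->
  (forall x, a < x < b -> F x = sqrt (g x) /\ 0 < g x /\ is_derive g x (g1 x) /\ is_derive g1 x (g2 x)) ->
  eq_lhs tau u F v =
  ((u+v^2)*(2*g v*g2 v - g1 v^2) + 2*v*g v*g1 v - 4*g v^2 - 4*tau) / (4*g v*sqrt (g v)).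
Proof.
  intros Hv H.
  assert (HD : forall x, a < x < b -> Derive F x = g1 x / (2 * sqrt (g x))).
  { intros x Hx. apply is_derive_unique.
    apply is_derive_ext_loc with (f := fun t => sqrt (g t)).
    { apply loc_imp with (1 := loc_int a b x Hx). intros t Ht. symmetry; apply H, Ht. }
    destruct (H x Hx) as (_ & Hg & Hd & _).
    auto_derive.
    - split; [eexists; eassumption| split; [lra|exact I]].
    - replace (Derive (fun x0 => g x0) x) with (g1 x) by (symmetry; apply is_derive_unique; exact Hd).
      field. apply Rgt_not_eq, sqrt_lt_R0, Hg. }
  assert (HD2 : Derive_n F 2 v = g2 v / (2 * sqrt (g v)) - g1 v * g1 v / (4 * g v * sqrt (g v))).
  { simpl. rewrite (Derive_ext_loc _ (fun x => g1 x / (2 * sqrt (g x)))).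
    2:{ apply loc_imp with (1 := loc_int a b v Hv). intros t Ht. apply HD, Ht. }
    destruct (H v Hv) as (_ & Hg & Hd & Hd1).
    apply is_derive_unique. auto_derive.
    - repeat split; try (eexists; eassumption); try lra.
      apply Rgt_not_eq. apply Rmult_lt_0_compat; [lra| apply sqrt_lt_R0, Hg].
    - replace (Derive (fun x0 => g x0) v) with (g1 v) by (symmetry; apply is_derive_unique; exact Hd).
      replace (Derive (fun x0 => g1 x0) v) with (g2 v) by (symmetry; apply is_derive_unique; exact Hd1).
      pose proof (sqrt_lt_R0 _ Hg). pose proof (sqrt_sqrt _ (Rlt_le _ _ Hg)).
      set (s := sqrt (g v)) in *. rewrite <- H1. field. lra. }
  unfold eq_lhs. rewrite HD2, (HD v Hv).
  destruct (H v Hv) as (HF & Hg & _).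
  rewrite HF.
  pose proof (sqrt_lt_R0 _ Hg). pose proof (sqrt_sqrt _ (Rlt_le _ _ Hg)).
  set (s := sqrt (g v)) in *. rewrite <- H1. field. lra.
Qed.

Definition sg (s : bool) : R := if s then 1 else -1.
Definition wN s u x := sqrt (u + x^2) + sg s * x.
Definition gN A B C s u x := A * wN s u x ^2 + B + C / wN s u x ^2.
Definition g1N A C s u x := sg s * (2*A*wN s u x^2 - 2*C/wN s u x^2)/sqrt(u+x^2).
Definition g2N A C s u x := (4*A*wN s u x^2 + 4*C/wN s u x^2)/(u+x^2)
   - sg s*(2*A*wN s u x^2 - 2*C/wN s u x^2)*x/(sqrt(u+x^2)^3).

Lemma wfun_wN s u x : wfun s u x = wN s u x.
Proof. unfold wfun, wN, sg; destruct s; ring. Qed.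

Lemma d_gN A B C s u x : 0 < u + x^2 -> wN s u x <> 0 ->
  is_derive (gN A B C s u) x (g1N A C s u x).
Proof.
  intros Hp Hw. pose proof (sqrt_lt_R0 _ Hp).
  unfold gN, g1N, wN in *; destruct s; simpl sg in *; auto_derive.
  - replace (u + x*(x*1)) with (u + x^2) by ring. repeat split; try lra; auto.
  - replace (u + x*(x*1)) with (u + x^2) by ring. field. split; lra.
  - replace (u + x*(x*1)) with (u + x^2) by ring. repeat split; try lra; auto.
  - replace (u + x*(x*1)) with (u + x^2) by ring. field. split; lra.
Qed.

Lemma d_g1N A C s u x : 0 < u + x^2 -> wN s u x <> 0 ->
  is_derive (g1N A C s u) x (g2N A C s u x).
Proof.
  intros Hp Hw. pose proof (sqrt_lt_R0 _ Hp).
  unfold g2N, g1N, wN in *; destruct s; simpl sg in *; auto_derive.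
  - replace (u + x*(x*1)) with (u + x^2) by ring. repeat split; try lra; auto.
  - replace (u + x*(x*1)) with (u + x^2) by ring.
    pose proof (sqrt_sqrt _ (Rlt_le _ _ Hp)).
    set (r := sqrt (u + x^2)) in *. rewrite <- H0. field. split; lra.
  - replace (u + x*(x*1)) with (u + x^2) by ring. repeat split; try lra; auto.
  - replace (u + x*(x*1)) with (u + x^2) by ring.
    pose proof (sqrt_sqrt _ (Rlt_le _ _ Hp)).
    set (r := sqrt (u + x^2)) in *. rewrite <- H0. field. split; lra.
Qed.

Lemma Q_gN A B C s u x tau : 0 < u + x^2 -> wN s u x <> 0 -> 4*A*C - B^2 = tau ->
  (u+x^2)*(2*gN A B C s u x*g2N A C s u x - g1N A C s u x^2)
   + 2*x*gN A B C s u x*g1N A C s u x - 4*gN A B C s u x^2 - 4*tau = 0.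
Proof.
  intros Hp Hw Ht. pose proof (sqrt_lt_R0 _ Hp). subst tau.
  pose proof (sqrt_sqrt _ (Rlt_le _ _ Hp)).
  unfold gN, g1N, g2N, wN in *.
  set (r := sqrt (u + x^2)) in *. clearbody r. rewrite <- H0.
  destruct s; simpl sg in *; field; split; lra.
Qed.

Lemma inv_phi tau p q s u x : 0 < phi_sol tau p q s u x ->
  q <> 0 /\ wN s u x <> 0 /\
  / phi_sol tau p q s u x = gN (q/2) p ((p^2+tau)/(2*q)) s u x.
Proof.
  intros H. unfold phi_sol in *. rewrite wfun_wN in *.
  set (w := wN s u x) in *.
  destruct (Req_dec q 0) as [Hq|Hq]. { subst q. rewrite !Rmult_0_r, Rmult_0_l in H. unfold Rdiv in H. rewrite Rmult_0_l in H. lra. }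
  destruct (Req_dec w 0) as [Hw|Hw]. { rewrite Hw in H. unfold Rdiv in H. replace (2*q*0^2) with 0 in H by ring. rewrite Rmult_0_l in H. lra. }
  destruct (Req_dec ((q * w ^ 2 + p) ^ 2 + tau) 0) as [Hd|Hd].
  { rewrite Hd in H. unfold Rdiv in H. rewrite Rinv_0, Rmult_0_r in H. lra. }
  split; [|split]; auto. unfold gN. fold w. field. auto.
Qed.

Lemma part2 : forall (tau : R) (a b : R -> R) (p q : R -> R) (s : R -> bool),
     (forall u v, a u < v < b u -> 0 < u + v ^ 2) ->
     (forall u v, a u < v < b u -> 0 < phi_sol tau (p u) (q u) (s u) u v) ->
     forall u v, a u < v < b u ->
       twice_diff (fun u' v' => phi_sol tau (p u') (q u') (s u') u' v') u v /\
       eq_lhs tau u (f_of (fun v' => phi_sol tau (p u) (q u) (s u) u v')) v = 0.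
Proof.
  intros tau a b p q s Hpos Hphi u v Hv.
  set (A := q u / 2). set (B := p u). set (C := (p u ^2 + tau)/(2 * q u)).
  assert (HI : forall x, a u < x < b u -> q u <> 0 /\ wN (s u) u x <> 0 /\
     / phi_sol tau (p u) (q u) (s u) u x = gN A B C (s u) u x /\ 0 < gN A B C (s u) u x).
  { intros x Hx. destruct (inv_phi tau (p u) (q u) (s u) u x (Hphi u x Hx)) as (H1 & H2 & H3).
    split; [auto|split; [auto|split]]. exact H3. change (0 < gN (q u / 2) (p u) ((p u ^ 2 + tau) / (2 * q u)) (s u) u x). rewrite <- H3. apply Rinv_0_lt_compat, Hphi, Hx. }
  assert (HD1 : forall x, a u < x < b u ->
     is_derive (fun v' => phi_sol tau (p u) (q u) (s u) u v') x
        (- g1N A C (s u) u x / (gN A B C (s u) u x)^2)).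
  { intros x Hx. apply is_derive_ext_loc with (f := fun t => / gN A B C (s u) u t).
    { apply loc_imp with (1 := loc_int _ _ x Hx). intros t Ht.
      destruct (HI t Ht) as (_ & _ & H3 & _). rewrite <- H3. apply Rinv_inv. }
    destruct (HI x Hx) as (_ & Hw & _ & Hg).
    auto_derive.
    - split; [exists (g1N A C (s u) u x); apply d_gN; auto| split; [lra|exact I]].
    - replace (Derive (fun x0 => gN A B C (s u) u x0) x) with (g1N A C (s u) u x)
        by (symmetry; apply is_derive_unique; apply d_gN; auto).
      field. lra. }
  split.
  - split.
    + eexists. apply HD1, Hv.
    + apply ex_derive_ext_loc with (f := fun x => - g1N A C (s u) u x / (gN A B C (s u) u x)^2).
      { apply loc_imp with (1 := loc_int _ _ v Hv). intros t Ht.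
        symmetry. apply is_derive_unique, HD1, Ht. }
      destruct (HI v Hv) as (_ & Hw & _ & Hg). pose proof (Hpos u v Hv).
      auto_derive. repeat split.
      * exists (g2N A C (s u) u v). apply d_g1N; auto.
      * exists (g1N A C (s u) u v). apply d_gN; auto.
      * rewrite Rmult_1_r. apply Rgt_not_eq, Rmult_lt_0_compat; auto.
  - rewrite (K tau u (a u) (b u) _ (gN A B C (s u) u) (g1N A C (s u) u) (g2N A C (s u) u) v Hv).
    + rewrite Q_gN. unfold Rdiv; ring. apply Hpos, Hv. apply HI, Hv.
      unfold A, B, C. field. apply (proj1 (HI v Hv)).
    + intros x Hx. destruct (HI x Hx) as (_ & Hw & H3 & Hg). pose proof (Hpos u x Hx).
      split; [|split; [auto|split]].
      * unfold f_of. rewrite <- H3, sqrt_inv. reflexivity.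
      * apply d_gN; auto.
      * apply d_g1N; auto.
Qed.

Definition EE (g g1 : R -> R) tau u x := (4*tau + (u+x^2)*g1 x^2 + 4*g x^2)/(2*g x).
Definition Aq g g1 tau u x := (EE g g1 tau u x + 2*sqrt(u+x^2)*g1 x)/(8*wN true u x^2).
Definition Cq g g1 tau u x := (EE g g1 tau u x - 2*sqrt(u+x^2)*g1 x)*wN true u x^2/8.
Definition Bq g g1 tau u x := g x - EE g g1 tau u x/4.

Lemma dconst (g g1 g2 : R -> R) tau u x :
  0 < u + x^2 -> 0 < g x -> wN true u x <> 0 ->
  is_derive g x (g1 x) -> is_derive g1 x (g2 x) ->
  (u+x^2)*(2*g x*g2 x - g1 x^2) + 2*x*g x*g1 x - 4*g x^2 - 4*tau = 0 ->
  is_derive (Aq g g1 tau u) x 0 /\ is_derive (Bq g g1 tau u) x 0 /\ is_derive (Cq g g1 tau u) x 0.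
Proof.
  intros Hp Hg Hw D1 D2 HQ.
  assert (E2 : g2 x = (4*g x^2 + 4*tau - 2*x*g x*g1 x + (u+x^2)*g1 x^2)/(2*(u+x^2)*g x)).
  { apply Rmult_eq_reg_r with (2*(u+x^2)*g x). 2: apply Rgt_not_eq; apply Rmult_lt_0_compat; lra.
    field_simplify. 2: lra. lra. }
  pose proof (sqrt_lt_R0 _ Hp). pose proof (sqrt_sqrt _ (Rlt_le _ _ Hp)).
  unfold Aq, Bq, Cq, EE, wN in *; simpl sg in *.
  split; [|split]; auto_derive;
  try (repeat split; try (eexists; eassumption); try lra;
       replace (u + x*(x*1)) with (u + x^2) by ring; auto;
       try (apply Rgt_not_eq; apply Rmult_lt_0_compat; lra);
       try (intro Hc; apply Hw; nra));
  replace (Derive (fun x0 => g x0) x) with (g1 x) by (symmetry; apply is_derive_unique; exact D1);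
  replace (Derive (fun x0 => g1 x0) x) with (g2 x) by (symmetry; apply is_derive_unique; exact D2);
  try rewrite E2;
  replace (u + x*(x*1)) with (u + x^2) by ring;
  set (r := sqrt (u + x^2)) in *; clearbody r;
  replace (u + x^2) with (r*r) by lra; field; lra.
Qed.

Lemma id1 g g1 tau u x : 0 < u + x^2 -> g x <> 0 -> wN true u x <> 0 ->
  g x = Bq g g1 tau u x + Aq g g1 tau u x * wN true u x^2 + Cq g g1 tau u x / wN true u x^2.
Proof. intros. unfold Bq, Aq, Cq, EE. field. auto. Qed.

Lemma id2 g g1 tau u x : 0 < u + x^2 -> g x <> 0 -> wN true u x <> 0 ->
  4 * Aq g g1 tau u x * Cq g g1 tau u x - Bq g g1 tau u x ^2 = tau.
Proof.
  intros Hp Hg Hw. pose proof (sqrt_sqrt _ (Rlt_le _ _ Hp)).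
  unfold Bq, Aq, Cq, EE, wN in *. set (r := sqrt (u + x^2)) in *. clearbody r.
  assert (Hu : u = r*r - x^2) by lra. subst u. field. split; auto.
Qed.

Lemma wprod u x : 0 < u + x^2 -> wN true u x * wN false u x = u.
Proof. intros Hp. pose proof (sqrt_sqrt _ (Rlt_le _ _ Hp)). unfold wN, sg. nra. Qed.

Lemma wnz s u x : 0 < u + x^2 -> u <> 0 -> wN s u x <> 0.
Proof.
  intros Hp Hu Hc. pose proof (wprod u x Hp).
  destruct s; rewrite Hc in H; lra.
Qed.

Lemma alg1 al be ga w g tau : al <> 0 -> w <> 0 -> g <> 0 ->
  g = be + al * w^2 + ga / w^2 -> 4 * al * ga - be^2 = tau ->
  / g = 2 * (2*al) * w^2 / ((2*al * w^2 + be)^2 + tau).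
Proof.
  intros Ha Hw Hg E T. subst tau.
  assert (D : (2*al*w^2 + be)^2 + (4*al*ga - be^2) = 4*al*w^2*g) by (rewrite E; field; auto).
  rewrite D. field. auto.
Qed.

Lemma alg2 be ga w w' u g tau : u <> 0 -> w <> 0 -> w' <> 0 -> w * w' = u -> ga <> 0 -> g <> 0 ->
  g = be + 0 * w^2 + ga / w^2 -> 4 * 0 * ga - be^2 = tau ->
  / g = 2 * (2*ga/u^2) * w'^2 / ((2*ga/u^2 * w'^2 + be)^2 + tau).
Proof.
  intros Hu Hw Hw' P Hga Hg E T. subst tau. subst u.
  assert (D : (2*ga/(w*w')^2*w'^2 + be)^2 + (4*0*ga - be^2) = 4*ga/w^2*g) by (rewrite E; field; auto).
  rewrite D. field. auto.
Qed.

Lemma part1 :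
  (forall (tau : R) (a b : R -> R) (phi : R -> R -> R),
     (forall u v, a u < v < b u -> 0 < u + v ^ 2) ->
     (forall u v, a u < v < b u -> u <> 0) ->
     (forall u v, a u < v < b u -> 0 < phi u v) ->
     (forall u v, a u < v < b u -> twice_diff phi u v) ->
     (forall u v, a u < v < b u -> eq_lhs tau u (f_of (phi u)) v = 0) ->
     (forall u, a u < b u ->
        exists v1 v2, a u < v1 < b u /\ a u < v2 < b u /\ phi u v1 <> phi u v2) ->
     exists (p q : R -> R) (s : R -> bool),
       forall u v, a u < v < b u -> phi u v = phi_sol tau (p u) (q u) (s u) u v).
Proof.
  intros tau a b phi Hpos Hu0 Hphi Htd Heq Hnc.
  set (G := fun u x => / phi u x).
  set (G1 := fun u x => - Derive (phi u) x / (phi u x)^2).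
  set (G2 := fun u x => - Derive (Derive (phi u)) x / (phi u x)^2 + 2 * (Derive (phi u) x)^2 / (phi u x)^3).
  set (mid := fun u => (a u + b u)/2).
  set (al := fun u => Aq (G u) (G1 u) tau u (mid u)).
  set (be := fun u => Bq (G u) (G1 u) tau u (mid u)).
  set (ga := fun u => Cq (G u) (G1 u) tau u (mid u)).
  exists (fun u => be u), (fun u => if Req_dec_T (al u) 0 then 2*ga u/u^2 else 2*al u),
    (fun u => if Req_dec_T (al u) 0 then false else true).
  intros u v Hv.
  assert (Hab : a u < b u) by lra.
  assert (Hm : a u < mid u < b u) by (unfold mid; lra).
  assert (HD : forall x, a u < x < b u -> is_derive (G u) x (G1 u x) /\ is_derive (G1 u) x (G2 u x)).
  { intros x Hx. destruct (Htd u x Hx) as [E1 E2]. pose proof (Hphi u x Hx).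
    split.
    - unfold G, G1. auto_derive.
      + split; [exact E1|split; [lra|exact I]].
      + change (Derive (fun x0 => phi u x0) x) with (Derive (phi u) x). field. lra.
    - unfold G1, G2. auto_derive.
      + repeat split; try exact E1; try exact E2. rewrite Rmult_1_r.
        apply Rgt_not_eq, Rmult_lt_0_compat; lra.
      + change (Derive (fun x0 => phi u x0) x) with (Derive (phi u) x).
        change (Derive (fun x0 => Derive (phi u) x0) x) with (Derive (Derive (phi u)) x).
        field. lra. }
  assert (HQ : forall x, a u < x < b u ->
    (u+x^2)*(2*G u x*G2 u x - G1 u x^2) + 2*x*G u x*G1 u x - 4*G u x^2 - 4*tau = 0).
  { intros x Hx.
    assert (Hg : 0 < G u x) by (apply Rinv_0_lt_compat, Hphi, Hx).
    pose proof (K tau u (a u) (b u) (f_of (phi u)) (G u) (G1 u) (G2 u) x Hx) as HK.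
    rewrite Heq in HK by exact Hx.
    - set (Q := _ + _ - _ - _) in HK |- *.
      assert (D : 0 < 4 * G u x * sqrt (G u x)).
      { apply Rmult_lt_0_compat; [lra| apply sqrt_lt_R0, Hg]. }
      replace Q with (Q / (4 * G u x * sqrt (G u x)) * (4 * G u x * sqrt (G u x))) by (unfold Rdiv; rewrite Rmult_assoc, Rinv_l, Rmult_1_r; [reflexivity | lra]).
      rewrite <- HK. ring.
    - intros t Ht. split; [|split; [|exact (HD t Ht)]].
      + unfold f_of, G. rewrite sqrt_inv. reflexivity.
      + apply Rinv_0_lt_compat, Hphi, Ht. }
  assert (HC : forall x, a u < x < b u ->
     Aq (G u) (G1 u) tau u x = al u /\ Bq (G u) (G1 u) tau u x = be u /\ Cq (G u) (G1 u) tau u x = ga u).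
  { assert (Hd0 : forall x, a u < x < b u ->
      is_derive (Aq (G u) (G1 u) tau u) x 0 /\ is_derive (Bq (G u) (G1 u) tau u) x 0 /\
      is_derive (Cq (G u) (G1 u) tau u) x 0).
    { intros x Hx. destruct (HD x Hx) as [D1 D2].
      apply dconst with (g2 := G2 u); auto.
      apply Rinv_0_lt_compat, Hphi, Hx. apply wnz; eauto. }
    intros x Hx. split; [|split].
    - apply (const_int (a u) (b u) (Aq (G u) (G1 u) tau u)); auto. intros t Ht; apply Hd0, Ht.
    - apply (const_int (a u) (b u) (Bq (G u) (G1 u) tau u)); auto. intros t Ht; apply Hd0, Ht.
    - apply (const_int (a u) (b u) (Cq (G u) (G1 u) tau u)); auto. intros t Ht; apply Hd0, Ht. }
  assert (Hid : forall x, a u < x < b u ->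
     G u x = be u + al u * wN true u x ^2 + ga u / wN true u x^2 /\ 4 * al u * ga u - be u ^2 = tau).
  { intros x Hx. destruct (HC x Hx) as (C1 & C2 & C3). rewrite <- C1, <- C2, <- C3.
    assert (G u x <> 0) by (apply Rgt_not_eq, Rinv_0_lt_compat, Hphi, Hx).
    split; [apply id1 | apply id2]; auto; apply wnz; eauto. }
  assert (Hphi_v : phi u v = / G u v) by (unfold G; rewrite Rinv_inv; reflexivity).
  assert (Gnz : G u v <> 0) by (apply Rgt_not_eq, Rinv_0_lt_compat, Hphi, Hv).
  destruct (Hid v Hv) as [I1 I2].
  unfold phi_sol. rewrite wfun_wN. rewrite Hphi_v.
  destruct (Req_dec_T (al u) 0) as [Ha|Ha].
  - assert (Hga : ga u <> 0).
    { intro Hg0. destruct (Hnc u Hab) as (v1 & v2 & Hv1 & Hv2 & Hne). apply Hne.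
      destruct (Hid v1 Hv1) as [J1 _]. destruct (Hid v2 Hv2) as [J2 _].
      rewrite Ha, Hg0 in J1, J2.
      replace (phi u v1) with (/ G u v1) by (unfold G; apply Rinv_inv).
      replace (phi u v2) with (/ G u v2) by (unfold G; apply Rinv_inv).
      rewrite J1, J2. unfold Rdiv. rewrite !Rmult_0_l, !Rplus_0_r. reflexivity. }
    rewrite Ha in I1, I2.
    apply alg2 with (w := wN true u v); auto.
    + apply (Hu0 u v Hv).
    + apply wnz; eauto.
    + apply wnz; eauto.
    + apply wprod; eauto.
  - apply alg1 with (be := be u) (ga := ga u); auto. apply wnz; eauto.
Qed.
Theorem lemma7p1 :
  (forall (tau : R) (a b : R -> R) (phi : R -> R -> R),
     (forall u v, a u < v < b u -> 0 < u + v ^ 2) ->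
     (forall u v, a u < v < b u -> u <> 0) ->
     (forall u v, a u < v < b u -> 0 < phi u v) ->
     (forall u v, a u < v < b u -> twice_diff phi u v) ->
     (forall u v, a u < v < b u -> eq_lhs tau u (f_of (phi u)) v = 0) ->
     (forall u, a u < b u ->
        exists v1 v2, a u < v1 < b u /\ a u < v2 < b u /\ phi u v1 <> phi u v2) ->
     exists (p q : R -> R) (s : R -> bool),
       forall u v, a u < v < b u -> phi u v = phi_sol tau (p u) (q u) (s u) u v)
  /\
  (forall (tau : R) (a b : R -> R) (p q : R -> R) (s : R -> bool),
     (forall u v, a u < v < b u -> 0 < u + v ^ 2) ->
     (forall u v, a u < v < b u -> 0 < phi_sol tau (p u) (q u) (s u) u v) ->
     forall u v, a u < v < b u ->
       twice_diff (fun u' v' => phi_sol tau (p u') (q u') (s u') u' v') u v /\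
       eq_lhs tau u (f_of (fun v' => phi_sol tau (p u) (q u) (s u) u v')) v = 0).
Proof. split; [exact part1 | exact part2]. Qed.
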